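(* Let $c_1>0$, $c_2>0$ and $k\in\mathbb{R}\setminus\{0\}$, and consider the system on $\mathbb{R}^3$ $$\dot z_1=\frac1{c_2}z_2z_3,\qquad \dot z_2=-\frac1{c_1}z_1z_3,\qquad \dot z_3=-\frac{k}{c_1}z_1 .$$ Let $H>0$ be a constant. Then the solution of this system restricted to the constant level surface $$z_1^2+\frac{c_1}{c_2}z_2^2=2H$$ is $$z_1(t)=\sqrt{2H}\cos\theta(t),\qquad z_2(t)=\sqrt{\frac{c_2}{c_1}}\sqrt{2H}\sin\theta(t),\qquad z_3(t)=-\sqrt{c_1c_2}\,\dot\theta(t),$$ where $\theta(t)$ is a solution of the pendulum equation $$\ddot\theta(t)=\frac{k}{c_1^2}\sqrt{\frac{c_1}{c_2}}\sqrt{2H}\cos\theta(t).$$ *)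

(* Defs.v *)
From Stdlib Require Import Reals.
From Coquelicot Require Import Coquelicot.

(* Main.v *)
Require Import Defs.
From Stdlib Require Import Reals Lra Psatz.
From Coquelicot Require Import Coquelicot.
Open Scope R_scope.
Lemma key (u v th w: R->R) : (forall t, is_derive u t (- v t * w t)) -> (forall t, is_derive v t (u t * w t)) -> (forall t, is_derive th t (w t)) -> forall t, is_derive (fun t => (u t - cos (th t))^2 + (v t - sin (th t))^2) t 0.
Proof.
intros Hu Hv Ht t.
auto_derive.
- repeat split; eexists; eauto.
- replace (Derive (fun x : R => u x) t) with (- v t * w t) by (symmetry; apply is_derive_unique; auto).
  replace (Derive (fun x : R => v x) t) with (u t * w t) by (symmetry; apply is_derive_unique; auto).
  replace (Derive (fun x : R => th x) t) with (w t) by (symmetry; apply is_derive_unique; auto).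
  ring.
Qed.

Lemma polar (u v : R) : u^2 + v^2 = 1 -> exists a, cos a = u /\ sin a = v.
Proof.
intros H.
assert (Hb : -1 <= u <= 1) by nra.
assert (Hs : sqrt (1 - u²) = Rabs v).
{ rewrite <- sqrt_Rsqr_abs. f_equal. unfold Rsqr. nra. }
destruct (Rle_dec 0 v) as [Hv|Hv].
- exists (acos u). split. apply cos_acos; auto. rewrite sin_acos, Hs by auto. apply Rabs_right; lra.
- exists (- acos u). split. rewrite cos_neg. apply cos_acos; auto.
  rewrite sin_neg, sin_acos, Hs by auto. rewrite Rabs_left; lra.
Qed.

Lemma const0 (F : R -> R) : (forall t, is_derive F t 0) -> forall t, F t = F 0.
Proof.
intros H t. destruct (Rtotal_order t 0) as [h|[h|h]].
- apply (eq_is_derive F t 0); [intros; apply H | lra].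
- subst; reflexivity.
- symmetry; apply (eq_is_derive F 0 t); [intros; apply H | lra].
Qed.

Lemma antider (f : R -> R) df : (forall t, is_derive f t (df t)) ->
  forall t, is_derive (fun t => RInt f 0 t) t (f t).
Proof.
intros H t.
assert (C : forall x, continuous f x).
{ intros x. exact (@ex_derive_continuous R_AbsRing R_NormedModule f x (ex_intro _ (df x) (H x))). }
apply is_derive_RInt with 0.
- exists (mkposreal 1 Rlt_0_1). intros y _. apply RInt_correct.
  apply ex_RInt_continuous. intros; auto.
- auto.
Qed.

Ltac req := match goal with |- ?a = ?b => change (@eq R a b) end.

Theorem proposition5p3 (c1 c2 k H : R) (z1 z2 z3 : R -> R) :
  0 < c1 -> 0 < c2 -> k <> 0 -> 0 < H ->
  (forall t, is_derive z1 t (/ c2 * z2 t * z3 t)) ->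
  (forall t, is_derive z2 t (- (/ c1 * z1 t * z3 t))) ->
  (forall t, is_derive z3 t (- (k / c1 * z1 t))) ->
  (forall t, z1 t ^ 2 + c1 / c2 * z2 t ^ 2 = 2 * H) ->
  exists theta dtheta : R -> R,
    (forall t, is_derive theta t (dtheta t)) /\
    (forall t, is_derive dtheta t
                 (k / c1 ^ 2 * sqrt (c1 / c2) * sqrt (2 * H) * cos (theta t))) /\
    (forall t,
        z1 t = sqrt (2 * H) * cos (theta t) /\
        z2 t = sqrt (c2 / c1) * sqrt (2 * H) * sin (theta t) /\
        z3 t = - (sqrt (c1 * c2) * dtheta t)).
Proof.
intros hc1 hc2 hk hH d1 d2 d3 E.
set (r := sqrt (2 * H)). set (s := sqrt (c2 / c1)). set (q := sqrt (c1 * c2)).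
set (p := sqrt (c1 / c2)).
assert (hr : 0 < r) by (apply sqrt_lt_R0; lra).
assert (hs : 0 < s) by (apply sqrt_lt_R0; apply Rdiv_lt_0_compat; lra).
assert (hq : 0 < q) by (apply sqrt_lt_R0; nra).
assert (hr2 : r * r = 2 * H) by (apply sqrt_sqrt; lra).
assert (hs2 : s * s = c2 / c1) by (apply sqrt_sqrt; apply Rlt_le, Rdiv_lt_0_compat; lra).
assert (sq : s * q = c2).
{ unfold s, q. rewrite <- sqrt_mult_alt by (apply Rlt_le, Rdiv_lt_0_compat; lra).
  replace (c2 / c1 * (c1 * c2)) with (c2 * c2) by (field; lra). apply sqrt_square; lra. }
assert (cs : c1 * s = q).
{ unfold s, q. rewrite <- (sqrt_square c1) at 1 by lra. rewrite <- sqrt_mult_alt by nra.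
  f_equal. field; lra. }
assert (pq : p * q = c1).
{ unfold p, q. rewrite <- sqrt_mult_alt by (apply Rlt_le, Rdiv_lt_0_compat; lra).
  replace (c1 / c2 * (c1 * c2)) with (c1 * c1) by (field; lra). apply sqrt_square; lra. }
set (w := fun t => - z3 t / q).
set (u := fun t => z1 t / r). set (v := fun t => z2 t / (s * r)).
assert (dw : forall t, is_derive w t (k / c1 ^ 2 * p * z1 t)).
{ intros t. unfold w. apply is_derive_ext with (fun t => (- / q) * z3 t).
  - intros t0; req; field; lra.
  - replace (k / c1 ^ 2 * p * z1 t) with (- / q * (- (k / c1 * z1 t))).
    + apply is_derive_scal; auto.
    + assert (p = c1 / q) by (rewrite <- pq; field; lra). rewrite H0. req. field; lra. }
destruct (polar (u 0) (v 0)) as [a [ca sa]].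
{ unfold u, v. specialize (E 0).
  replace 1 with ((z1 0 ^2 + c1/c2*z2 0^2)/(2*H)) by (rewrite E; field; lra).
  rewrite <- hr2. replace (c1/c2) with (/(s*s)) by (rewrite hs2; field; lra). field; lra. }
set (th := fun t => a + RInt w 0 t).
assert (dth : forall t, is_derive th t (w t)).
{ intros t. unfold th.
  pose proof (antider w _ dw t) as Hi.
  pose proof (@is_derive_plus R_AbsRing R_NormedModule (fun _ => a) (fun t => RInt w 0 t) t zero (w t) (@is_derive_const R_AbsRing R_NormedModule a t) Hi) as Hp.
  rewrite plus_zero_l in Hp. exact Hp. }
assert (du : forall t, is_derive u t (- v t * w t)).
{ intros t. unfold u. apply is_derive_ext with (fun t => / r * z1 t).
  - intros t0; req; field; lra.
  - replace (- v t * w t) with (/ r * (/ c2 * z2 t * z3 t)).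
    + apply is_derive_scal; auto.
    + unfold v, w. req. rewrite <- sq. field. lra. }
assert (dv : forall t, is_derive v t (u t * w t)).
{ intros t. unfold v. apply is_derive_ext with (fun t => / (s * r) * z2 t).
  - intros t0; req; field; lra.
  - replace (u t * w t) with (/ (s * r) * (- (/ c1 * z1 t * z3 t))).
    + apply is_derive_scal; auto.
    + unfold u, w. req. rewrite <- cs. field. lra. }
assert (F0 := const0 _ (key u v th w du dv dth)).
assert (th0 : th 0 = a) by (unfold th; rewrite RInt_point; unfold zero; simpl; ring).
assert (Z : forall t, u t = cos (th t) /\ v t = sin (th t)).
{ intros t. specialize (F0 t). cbv beta in F0. rewrite th0, ca, sa in F0.
  assert (h0 : (u t - cos (th t))^2 + (v t - sin (th t))^2 = 0) by (rewrite F0; ring).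
  revert h0. generalize (u t) (cos (th t)) (v t) (sin (th t)). intros x1 x2 x3 x4 h0.
  pose proof (pow2_ge_0 (x1-x2)); pose proof (pow2_ge_0 (x3-x4)).
  assert (A : (x1-x2)^2 = 0) by lra. assert (B : (x3-x4)^2 = 0) by lra.
  assert (A2 : Rsqr (x1-x2) = 0) by (unfold Rsqr; simpl in A; lra). assert (B2 : Rsqr (x3-x4) = 0) by (unfold Rsqr; simpl in B; lra). apply Rsqr_0_uniq in A2. apply Rsqr_0_uniq in B2. split; lra. }
exists th, w. split; [exact dth|]. split.
- intros t. destruct (Z t) as [Z1 _]. fold r. fold p.
  rewrite <- Z1. unfold u. replace (r * (z1 t / r)) with (z1 t) by (field; lra).
  replace (k / c1 ^ 2 * p * r * (z1 t / r)) with (k / c1 ^ 2 * p * z1 t) by (field; lra). auto.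
- intros t. destruct (Z t) as [Z1 Z2]. fold r s q. rewrite <- Z1, <- Z2. unfold u, v, w.
  repeat split; field; lra.
Qed.
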